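(* Let $N\ge1$ and $b\ge1$ be integers, let $\Delta\ge 1$ and $K\ge 1$ be reals, and suppose $b\le\log_2(N/(K\Delta))$. Then there is a set $\mathcal{Y}\subset(\{0,1\}^b)^N$ of entropy deficiency at most $\Delta$ and min-entropy rate more than $1-1/b$ such that for every $I\subseteq[N]$ with $|I|\le (K-1)\Delta$, the set $\mathrm{IP}_b^{[N]\setminus I}((\{0,1\}^b)^N,\mathcal{Y})$ does not contain the all-$1$ string.
   Context: The Inner-Product function $\mathrm{IP}_b:\{0,1\}^b\times\{0,1\}^b\to\{0,1\}$ is $\mathrm{IP}_b(x,y)=\sum_j x_jy_j \bmod 2$. For $\mathcal{A},\mathcal{B}\subseteq(\{0,1\}^b)^N$ and $J\subseteq[N]$, $\mathrm{IP}_b^J(\mathcal{A},\mathcal{B})\subseteq\{0,1\}^J$ is the set of vectors $(\mathrm{IP}_b(x_i,y_i))_{i\in J}$ with $x\in\mathcal{A}$, $y\in\mathcal{B}$. A set is identified with the uniform distribution on it. The entropy deficiency of a set $\mathcal{Y}\subseteq(\{0,1\}^b)^N$ is $bN-\log_2|\mathcal{Y}|$. The min-entropy rate of a distribution $\mathcal{D}$ on $U^N$ is the largest $\tau$ such that for every $J\subseteq[N]$ and $\alpha_J\in U^J$, $\Pr_{x\sim\mathcal{D}}[x_J=\alpha_J]\le|U|^{-\tau|J|}$ (here $|U|=2^b$). *)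

(* Defs.v *)
From mathcomp Require Import all_boot.
From Stdlib Require Import Reals.
Set Implicit Arguments.
Unset Strict Implicit.
Unset Printing Implicit Defensive.

Definition blk (b : nat) := {ffun 'I_b -> bool}.
Definition word (N b : nat) := {ffun 'I_N -> blk b}.

Definition IP (b : nat) (x y : blk b) : bool :=
  odd (\sum_(j < b) ((x j && y j) : nat)).

(* IP_b^J(A,B) subset of {0,1}^J.  A string in {0,1}^J is encoded as a
   function 'I_N -> bool that is false outside J. *)
Definition IPJ (N b : nat) (J : {set 'I_N}) (A B : {set word N b})
  : {set {ffun 'I_N -> bool}} :=
  [set [ffun i => (i \in J) && IP (x i) (y i)] | x : word N b in A, y : word N b in B].

Definition ones (N : nat) (J : {set 'I_N}) : {ffun 'I_N -> bool} :=
  [ffun i => i \in J].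

Local Open Scope R_scope.

Definition log2 (x : R) : R := ln x / ln 2.

Definition entropy_deficiency (N b : nat) (Y : {set word N b}) : R :=
  INR (b * N) - log2 (INR #|Y|).

Definition prob_restr (N b : nat) (Y : {set word N b}) (J : {set 'I_N})
  (alpha : word N b) : R :=
  INR #|[set x in Y | [forall j in J, x j == alpha j]]| / INR #|Y|.

Definition min_entropy_cond (N b : nat) (Y : {set word N b}) (tau : R) : Prop :=
  forall (J : {set 'I_N}) (alpha : word N b),
    prob_restr Y J alpha <= Rpower 2 (- (INR b * tau * INR #|J|)).

(* tau is the min-entropy rate of Y: the largest tau satisfying the condition
   (note |U| = 2^b). *)
Definition is_min_entropy_rate (N b : nat) (Y : {set word N b}) (tau : R) : Prop :=
  min_entropy_cond Y tau /\ forall tau', min_entropy_cond Y tau' -> tau' <= tau.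

(* Main.v *)
Require Import Defs.
From mathcomp Require Import all_boot.

Module Comb.
From mathcomp Require Import all_algebra zify ring.
Set Implicit Arguments. Unset Strict Implicit. Unset Printing Implicit Defensive.

Lemma arith t d e M : 1 <= M ->
  (t + 2 + d + t).+1 * ((d + 1) * M ^ 2) <=
  (M * (t + 2 + d) + e + t + 2) * (M * (t + 2 + d) - (t + 2 + d) + 2 + d + e).
Proof.
case: M => [//|M] _.
rewrite [M.+1 * _]mulSn addKn -[(t + 2 + d + t).+1]addn1 -[M.+1]addn1.
have -> : (t + 2 + d + M * (t + 2 + d) + e + t + 2) * (M * (t + 2 + d) + 2 + d + e)
  = (t + 2 + d + t + 1) * ((d + 1) * (M + 1) ^ 2) +
  (5 + 6*e + e^2 + 6*M + 4*M*e + M^2 + 2*d + 2*d*e + 2*d*M + 2*d*M*e + 2*t + 2*t*e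
   + 6*t*M + 2*t*M*e + 2*t*M^2 + 2*t^2*M + t^2*M^2) by ring.
exact: leq_addr.
Qed.

Section Ineq.
Variables N k M : nat.
Hypothesis hM : 1 <= M.
Hypothesis hk : 1 <= k.
Hypothesis hN : k + M * k <= N.

Lemma pairQ t : t < k -> 'C(N, k - 1 - t) * M ^ (2 * t + 1) <= 'C(N, k + t).
Proof.
elim: t => [_|t IH Ht].
  rewrite addn0 subn0 muln0 add0n expn1.
  have E := mul_bin_left N (k - 1).
  rewrite subn1 prednK // in E.
  rewrite -(leq_pmul2l hk) E.
  rewrite subn1 mulnCA [_ * 'C(_, _)]mulnC leq_mul2l; apply/orP; right; lia.
have IH' := IH (ltnW Ht).
set a := k - 2 - t.
have Ha : k - 1 - t = a.+1 by rewrite /a; lia.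
have E1 := mul_bin_left N a.
have E2 := mul_bin_left N (k + t).
rewrite Ha in IH'.
have Hpos : 0 < (N - a) * (k + t).+1 by rewrite muln_gt0; apply/andP; split => //; lia.
rewrite -(leq_pmul2l Hpos).
have -> : k - 1 - t.+1 = a by rewrite /a; lia.
rewrite [k + t.+1]addnS.
have -> : (N - a) * (k + t).+1 * ('C(N, a) * M ^ (2 * t.+1 + 1))
   = (k + t).+1 * ('C(N, a.+1) * M ^ (2 * t + 1)) * (a.+1 * M ^ 2).
  have EM : M ^ (2 * t.+1 + 1) = M ^ (2 * t + 1) * M ^ 2 by rewrite -expnD; congr (_ ^ _); lia.
  rewrite EM; transitivity ((k + t).+1 * M ^ (2 * t + 1) * M ^ 2 * ((N - a) * 'C(N, a))); first ring.
  rewrite -E1; ring.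
have -> : (N - a) * (k + t).+1 * 'C(N, (k + t).+1) = (N - a) * ((N - (k + t)) * 'C(N, k + t)).
  by rewrite -E2; ring.
apply: (@leq_trans ((k + t).+1 * 'C(N, k + t) * (a.+1 * M ^ 2))).
  by rewrite leq_mul2r leq_mul2l IH' !orbT.
set C := 'C(N, k + t).
have -> : (k + t).+1 * C * (a.+1 * M ^ 2) = C * ((k + t).+1 * (a.+1 * M ^ 2)) by ring.
have -> : (N - a) * ((N - (k + t)) * C) = C * ((N - a) * (N - (k + t))) by ring.
rewrite leq_mul2l; apply/orP; right.
have -> : a.+1 = k - 1 - t by rewrite Ha.
have HA : M * k <= N - k by lia.
move: HA; set A := N - k => HA.
have -> : N - a = A + t + 2 by rewrite /A /a; lia.
have -> : N - (k + t) = A - t by rewrite /A; lia.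
have Hkt : t + 2 <= k by lia.
have HkM : k <= M * k by rewrite leq_pmull.
have := arith t (k - (t + 2)) (A - M * k) hM.
have -> : t + 2 + (k - (t + 2)) = k by lia.
have -> : k - (t + 2) + 1 = k - 1 - t by lia.
have -> : M * k + (A - M * k) + t + 2 = A + t + 2 by lia.
have -> : M * k - k + 2 + (k - (t + 2)) + (A - M * k) = A - t by lia.
done.
Qed.

Lemma sum_lt (c : nat -> nat) :
  (forall t, t < k -> c (k - 1 - t) <= c (k + t)) -> c (k - 1) < c k -> k + k <= N.+1 ->
  \sum_(0 <= j < k) c j < \sum_(k <= j < N.+1) c j.
Proof.
move=> Hp Hs H2.
rewrite big_nat_rev /= add0n.
rewrite (@big_cat_nat _ _ _ (k + k) k N.+1) ?leq_addr //=.
apply: ltn_addr.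
rewrite (big_addn 0 (k + k) k) addnK.
rewrite big_ltn // [X in _ < X]big_ltn //= subn1 add0n.
rewrite -addSn; apply: leq_add; first by rewrite -subn1.
rewrite big_nat_cond [X in _ <= X]big_nat_cond; apply: leq_sum => i /andP[/andP[_ Hi] _].
have := Hp i Hi; rewrite addnC; congr (c _ <= _); lia.
Qed.

Lemma cc_pair t : t < k ->
  'C(N, k - 1 - t) * M ^ (N - (k - 1 - t)) <= 'C(N, k + t) * M ^ (N - (k + t)).
Proof.
move=> Ht.
have HMk : k <= M * k := leq_pmull k hM.
have -> : N - (k - 1 - t) = (N - (k + t)) + (2 * t + 1) by lia.
rewrite expnD [M ^ (N - (k + t)) * _]mulnC mulnA leq_mul2r; apply/orP; right; exact: pairQ.
Qed.

Lemma cc_strict : 'C(N, k - 1) * M ^ (N - (k - 1)) < 'C(N, k) * M ^ (N - k).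
Proof.
have HMk : k <= M * k := leq_pmull k hM.
have -> : N - (k - 1) = (N - k) + 1 by lia.
rewrite expnD expn1 [M ^ (N - k) * M]mulnC mulnA ltn_mul2r expn_gt0 hM /=.
have E := mul_bin_left N (k - 1).
rewrite subn1 prednK // in E.
rewrite -(ltn_pmul2l hk) E subn1 mulnCA [_ * 'C(_, _)]mulnC ltn_mul2l bin_gt0; apply/andP; split; lia.
Qed.

Lemma main_ineq :
  \sum_(0 <= j < k) 'C(N, j) * M ^ (N - j) < \sum_(k <= j < N.+1) 'C(N, j) * M ^ (N - j).
Proof.
have HMk : k <= M * k := leq_pmull k hM.
apply: sum_lt; [exact: cc_pair | | lia].
exact: cc_strict.
Qed.
End Ineq.

Section Count.
Variables N b : nat.
Definition z0 : blk b := [ffun _ => false].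
Definition zs (y : word N b) : {set 'I_N} := [set i | y i == z0].
Definition zc (y : word N b) := #|zs y|.
Definition mm := 2 ^ b.

Lemma card_blk : #|{: blk b}| = mm.
Proof. by rewrite /blk card_ffun card_bool card_ord. Qed.

Lemma card_word : #|{: word N b}| = mm ^ N.
Proof. by rewrite /word card_ffun card_blk card_ord. Qed.

Lemma card_zs (S : {set 'I_N}) :
  #|[set y : word N b | zs y == S]| = (mm - 1) ^ (N - #|S|).
Proof.
pose F := fun i : 'I_N => if i \in S then pred1 z0 else predC1 z0.
have -> : [set y : word N b | zs y == S] = [set y | y \in family F].
  apply/setP => y; rewrite !inE; apply/eqP/familyP.
    move=> E i; rewrite /F -E !inE; case: eqP => [->|/eqP h]; rewrite !inE ?eqxx //.
  move=> H; apply/setP => i; rewrite inE; have := H i; rewrite /F.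
  by case: (i \in S); rewrite !inE; [move=> -> | move=> /negbTE].
rewrite cardsE card_family foldrE big_map big_enum /=.
rewrite (bigID (fun i => i \in S)) /= big1; last first.
  move=> i Hi; rewrite /F Hi -(card1 z0); exact: eq_card.
rewrite mul1n (eq_bigr (fun _ => mm - 1)); last first.
  move=> i /negbTE Hi; rewrite /F Hi.
  rewrite (@eq_card _ _ (predC1 z0)) // cardC1.
  by have := card_blk; rewrite /blk => ->; rewrite subn1.
rewrite prod_nat_const.
congr (_ ^ _).
have := cardsC S; rewrite card_ord => E.
have -> : #|[pred i | i \notin S]| = #|~: S| by apply: eq_card => i; rewrite !inE.
move: E; move: (#|S|) (#|~: S|) => a c E.
by rewrite -E addKn.
Qed.


Lemma card_zc (j : nat) :
  #|[set y : word N b | zc y == j]| = 'C(N, j) * (mm - 1) ^ (N - j).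
Proof.
rewrite -sum1_card.
rewrite (partition_big (@zs) (fun S : {set 'I_N} => #|S| == j)) /=; last first.
  by move=> y; rewrite inE.
rewrite (eq_bigr (fun S => (mm - 1) ^ (N - j))); last first.
  move=> S /eqP HS; rewrite -HS -card_zs -sum1_card; apply: eq_bigl => y.
  rewrite !inE; apply/andP/idP => [[] //|H]; split => //.
  by rewrite /zc (eqP H) HS.
rewrite sum_nat_const; congr (_ * _).
by rewrite -cardsE card_draws card_ord.
Qed.

Definition cc j := 'C(N, j) * (mm - 1) ^ (N - j).

Lemma card_zc_lt n : #|[set y : word N b | zc y < n]| = \sum_(0 <= j < n) cc j.
Proof.
elim: n => [|n IH].
  rewrite big_geq //; apply/eqP; rewrite cards_eq0; apply/eqP/setP => y; by rewrite !inE.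
rewrite (big_nat_recr n 0) //= -IH /cc -card_zc -cardsUI.
have -> : [set y : word N b | zc y < n] :&: [set y | zc y == n] = set0.
  by apply/setP => y; rewrite !inE; case: ltngtP.
rewrite cards0 addn0; apply: eq_card => y; rewrite !inE ltnS leq_eqVlt.
by rewrite orbC.
Qed.

Lemma zc_le y : zc y <= N.
Proof. by have := max_card (zs y); rewrite card_ord. Qed.

Lemma card_Y k : k <= N.+1 ->
  #|[set y : word N b | k <= zc y]| = \sum_(k <= j < N.+1) cc j.
Proof.
move=> Hk.
have H1 : #|[set y : word N b | zc y < N.+1]| = mm ^ N.
  rewrite -card_word -cardsT; apply: eq_card => y; rewrite !inE ltnS zc_le.
  done.
have H2 := cardsC [set y : word N b | k <= zc y].
have H3 : ~: [set y : word N b | k <= zc y] = [set y | zc y < k].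
  by apply/setP => y; rewrite !inE -ltnNge.
rewrite H3 card_zc_lt card_word -H1 card_zc_lt in H2.
rewrite (@big_cat_nat _ _ _ k 0 N.+1) //= in H2.
by apply/eqP; rewrite -(eqn_add2r (\sum_(0 <= j < k) cc j)) H2 addnC.
Qed.
End Count.

Section Agree.
Variables N b : nat.

Lemma card_agree (J : {set 'I_N}) (al : word N b) :
  #|[set x : word N b | [forall j in J, x j == al j]]| = mm b ^ (N - #|J|).
Proof.
pose F := fun i : 'I_N => if i \in J then pred1 (al i) else predT.
have -> : [set x : word N b | [forall j in J, x j == al j]] = [set y | y \in family F].
  apply/setP => y; rewrite !inE; apply/forall_inP/familyP.
    move=> H i; rewrite /F; case Hi: (i \in J); rewrite inE //; exact: H.
  move=> H i Hi; have := H i; by rewrite /F Hi inE.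
rewrite cardsE card_family foldrE big_map big_enum /=.
rewrite (bigID (fun i => i \in J)) /= big1; last first.
  by move=> i Hi; rewrite /F Hi -(card1 (al i)); exact: eq_card.
rewrite mul1n (eq_bigr (fun _ => mm b)); last first.
  move=> i /negbTE Hi; rewrite /F Hi -(card_blk b).
  by apply: eq_card.
rewrite prod_nat_const.
congr (_ ^ _).
have := cardsC J; rewrite card_ord => E.
have -> : #|[pred i | i \notin J]| = #|~: J| by apply: eq_card => i; rewrite !inE.
move: E; move: (#|J|) (#|~: J|) => a c E.
by rewrite -E addKn.
Qed.

Lemma Y_big k : 1 <= b -> 1 <= k -> mm b * k <= N ->
  mm b ^ N < 2 * #|[set y : word N b | k <= zc y]|.
Proof.
move=> hb hk hN.
have hm : 2 <= mm b by rewrite /mm -{1}(expn1 2) leq_exp2l.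
have hN' : k + (mm b - 1) * k <= N.
  by rewrite mulnBl mul1n addnC subnK // leq_pmull //; lia.
have HkN : k <= N.+1 by have := leq_pmull k (ltnW hm); lia.
have := main_ineq (_ : 1 <= mm b - 1) hk hN'.
have E1 := card_zc_lt N b k.
have E2 := @card_Y N b k HkN.
rewrite /cc in E1 E2; rewrite -E1 -E2 => H.
have H3 := cardsC [set y : word N b | k <= zc y].
have H4 : ~: [set y : word N b | k <= zc y] = [set y | zc y < k].
  by apply/setP => y; rewrite !inE -ltnNge.
rewrite H4 card_word in H3.
have H5 : 0 < mm b - 1 by rewrite subn_gt0.
move: (H H5); rewrite -H3.
move: (#|[set y : word N b | k <= zc y]|) (#|[set y : word N b | zc y < k]|) => u v.
lia.
Qed.
End Agree.

Lemma IP_z0 b (x : blk b) : IP x (z0 b) = false.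
Proof. by rewrite /IP big1 // => j _; rewrite /z0 ffunE andbF. Qed.

Lemma notin_IPJ N b k (I : {set 'I_N}) : #|I| < k ->
  ones (~: I) \notin IPJ (~: I) [set: word N b] [set y : word N b | k <= zc y].
Proof.
move=> HI; apply/negP => /imset2P [x y _ Hy E].
rewrite inE in Hy.
case: (boolP [exists i, (i \notin I) && (y i == z0 b)]) => [/existsP [i /andP [Hi Hz]]|Hn].
  have := congr1 (fun f : {ffun 'I_N -> bool} => f i) E; rewrite !ffunE /= (eqP Hz) IP_z0 !inE Hi //.
have Hs : zs y \subset I.
  apply/subsetP => i; rewrite inE => Hz; apply: contraR Hn => Hi.
  by apply/existsP; exists i; rewrite Hi Hz.
have := subset_leq_card Hs; rewrite -/(zc y); lia.
Qed.

Lemma cnt_le1 N b (Y : {set word N b}) (J : {set 'I_N}) (al : word N b) :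
  #|[set x in Y | [forall j in J, x j == al j]]| <= #|Y|.
Proof. by apply: subset_leq_card; apply/subsetP => x; rewrite inE => /andP []. Qed.

Lemma cnt_le2 N b (Y : {set word N b}) (J : {set 'I_N}) (al : word N b) :
  #|[set x in Y | [forall j in J, x j == al j]]| <= expn 2 (b * (N - #|J|)).
Proof.
rewrite expnM -/(mm b) -(card_agree J al); apply: subset_leq_card; apply/subsetP => x.
by rewrite !inE => /andP [].
Qed.

Lemma cY_le N b (Y : {set word N b}) : #|Y| <= expn 2 (b * N).
Proof. by rewrite expnM -/(mm b) -card_word max_card. Qed.

End Comb.

From Stdlib Require Import Reals Lra Classical.
From Stdlib Require ZArith.
Local Open Scope R_scope.

Lemma ln2_pos : 0 < ln 2.
Proof. rewrite -ln_1; apply ln_increasing; lra. Qed.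

Lemma Rp_lt x y : x < y -> Rpower 2 x < Rpower 2 y.
Proof. intro h; unfold Rpower; apply exp_increasing; have := ln2_pos; nra. Qed.

Lemma Rp_le x y : x <= y -> Rpower 2 x <= Rpower 2 y.
Proof. move=> h; case: (Rle_lt_or_eq_dec _ _ h) => [h'|->]; [left; exact: Rp_lt | right; reflexivity]. Qed.

Lemma Rp_lt_inv x y : Rpower 2 x < Rpower 2 y -> x < y.
Proof. intro h; apply Rnot_le_lt; intro h'; have := Rp_le _ _ h'; lra. Qed.

Lemma Rp_le_inv x y : Rpower 2 x <= Rpower 2 y -> x <= y.
Proof. intro h; apply Rnot_lt_le; intro h'; have := Rp_lt _ _ h'; lra. Qed.

Lemma Rp_pos x : 0 < Rpower 2 x.
Proof. unfold Rpower; apply exp_pos. Qed.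

Lemma Rp_div a c : Rpower 2 a / Rpower 2 c = Rpower 2 (a - c).
Proof. unfold Rpower, Rdiv. rewrite -exp_Ropp -exp_plus. f_equal; ring. Qed.

Lemma Rp_log x : 0 < x -> Rpower 2 (ln x / ln 2) = x.
Proof.
intro hx; unfold Rpower. have h := ln2_pos.
replace (ln x / ln 2 * ln 2) with (ln x) by (field; lra).
now apply exp_ln.
Qed.

Lemma closed_cond (E : R -> Prop) s p c : is_lub E s -> (exists t, E t) -> 0 <= c ->
  (forall t, E t -> p <= Rpower 2 (- (c * t))) -> p <= Rpower 2 (- (c * s)).
Proof.
intros [Hub Hl] [t0 Ht0] Hc H.
apply Rnot_lt_le; intro Hlt.
destruct (Req_dec c 0) as [c0|cn0].
- have := H t0 Ht0. rewrite c0 !Rmult_0_l in Hlt *. lra.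
- have cpos : 0 < c by lra.
  have h2 := ln2_pos.
  have ppos : 0 < p by have := Rp_pos (- (c * s)); lra.
  set t1 := - (ln p / ln 2) / c.
  have Ht1 : Rpower 2 (- (c * t1)) = p.
  { replace (- (c * t1)) with (ln p / ln 2). now apply Rp_log. rewrite /t1. field. split; apply: Rgt_not_eq; lra. }
  have Hs : t1 < s.
  { apply Rnot_le_lt; intro hs. have := Rp_le (- (c * t1)) (- (c * s)) ltac:(nra). lra. }
  have [t [Et Ht]] : exists t, E t /\ t1 < t.
  { apply NNPP; intro hn. have : s <= t1.
    { apply Hl; intros t Et; apply Rnot_lt_le; intro; apply hn; now exists t. }
    lra. }
  have := H t Et. have := Rp_lt (- (c * t)) (- (c * t1)) ltac:(nra). lra.
Qed.

Lemma INR_expn2 (n : nat) : INR (expn 2 n)%N = Rpower 2 (INR n).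
Proof.
rewrite Rpower_pow; last lra.
elim: n => [|n IH] //=.
rewrite expnS mulnE mult_INR IH /=; lra.
Qed.

Lemma INR_muln (m n : nat) : INR (muln m n) = INR m * INR n.
Proof. by rewrite mulnE mult_INR. Qed.

Local Close Scope R_scope.

Theorem theorem4 (N b : nat) (Delta K : R) :
  (1 <= N)%N -> (1 <= b)%N -> (1 <= Delta)%R -> (1 <= K)%R ->
  (INR b <= log2 (INR N / (K * Delta)))%R ->
  exists Y : {set word N b},
    Y != set0 /\
    (entropy_deficiency Y <= Delta)%R /\
    (exists tau : R, is_min_entropy_rate Y tau /\ (1 - 1 / INR b < tau)%R) /\
    (forall I : {set 'I_N},
       (INR #|I| <= (K - 1) * Delta)%R ->
       ones (~: I) \notin IPJ (~: I) [set: word N b] Y).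
Proof.
move=> HN Hb HD HK Hlog.
have h2 := ln2_pos.
set r0 := ((K - 1) * Delta)%R.
have Hr0 : (0 <= r0)%R by apply: Rmult_le_pos; lra.
have [Hup1 Hup2] := archimed r0.
have Hup0 : (0 < up r0)%Z by apply: lt_IZR; lra.
pose k := Z.to_nat (up r0).
have Hk : INR k = IZR (up r0).
  by rewrite INR_IZR_INZ Znat.Z2Nat.id //; apply: BinInt.Z.lt_le_incl.
have hk1 : (1 <= k)%N.
  have : (INR 0 < INR k)%R by rewrite Hk /=; lra.
  by move/INR_lt/ltP.
have Hbpos : (0 < INR b)%R by apply: lt_0_INR; apply/ltP.
have HNpos : (0 < INR N)%R by apply: lt_0_INR; apply/ltP.
have HKD : (0 < K * Delta)%R by apply: Rmult_lt_0_compat; lra.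
have HX : (0 < INR N / (K * Delta))%R by apply: Rdiv_lt_0_compat.
have H2b : (Rpower 2 (INR b) <= INR N / (K * Delta))%R.
  rewrite -[X in (_ <= X)%R](Rp_log _ HX).
  apply: Rp_le; exact: Hlog.
have HmkN : (Comb.mm b * k <= N)%N.
  apply/leP; apply: INR_le.
  rewrite mulnE mult_INR /Comb.mm INR_expn2.
  have Hk2 : (INR k <= K * Delta)%R.
    rewrite Hk; have : (r0 + 1 <= K * Delta)%R by rewrite /r0; nra.
    lra.
  have Hp := Rp_pos (INR b).
  apply: (Rle_trans _ (INR N / (K * Delta) * (K * Delta))).
    by apply: Rmult_le_compat; lra.
  right; field; split; apply: Rgt_not_eq; lra.
set Y := [set y : word N b | (k <= Comb.zc y)%N].
have HY := Comb.Y_big Hb hk1 HmkN.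
set cY := #|Y|.
have HYT : (expn (Comb.mm b) N < 2 * cY)%N by exact: HY.
have HcYle : (cY <= expn 2 (b * N))%N by exact: Comb.cY_le.
rewrite /Comb.mm -expnM in HYT.
have HcYpos : (0 < cY)%N by move: HYT; case: (cY) => //; rewrite muln0.
have HcYR : (0 < INR cY)%R by apply: lt_0_INR; apply/ltP.
set L := log2 (INR cY).
have EcY : INR cY = Rpower 2 L by rewrite /L /log2 Rp_log.
set r := (INR (b * N) - L)%R.
have Hr1 : (r < 1)%R.
  have : (INR (expn 2 (b * N)) < INR (2 * cY))%R by apply: lt_INR; apply/ltP.
  rewrite INR_expn2 (INR_muln 2 cY) EcY.
  have -> : (INR 2 * Rpower 2 L = Rpower 2 (L + 1))%R.
    by rewrite Rpower_plus Rpower_1 /=; lra.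
  move/Rp_lt_inv; rewrite /r; lra.
have Hr0' : (0 <= r)%R.
  have : (INR cY <= INR (expn 2 (b * N)))%R by apply: le_INR; apply/leP.
  rewrite INR_expn2 EcY => /Rp_le_inv; rewrite /r; lra.
set tau1 := (1 - r / INR b)%R.
have Hcond1 : min_entropy_cond Y tau1.
  move=> J al; rewrite /prob_restr.
  set cnt := #|[set x in Y | [forall j in J, x j == al j]]|.
  have Hc1 : (cnt <= cY)%N by exact: Comb.cnt_le1.
  have Hc2 : (cnt <= expn 2 (b * (N - #|J|)))%N by exact: Comb.cnt_le2.
  have HJN : (#|J| <= N)%N by have := max_card J; rewrite card_ord.
  case: (eqVneq #|J| 0%N) => [J0|Jn0].
    rewrite J0 /= Rmult_0_r Ropp_0 Rpower_O; last lra.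
    rewrite /Rdiv; apply: (Rmult_le_reg_r (INR cY)) => //.
    rewrite -/cY Rmult_assoc Rinv_l; last by apply: Rgt_not_eq; lra.
    rewrite Rmult_1_r Rmult_1_l; apply: le_INR; exact/leP.
  apply: (Rle_trans _ (INR (expn 2 (b * (N - #|J|))) / INR cY)).
    rewrite /Rdiv; apply: Rmult_le_compat_r.
      by left; apply: Rinv_0_lt_compat.
    by apply: le_INR; apply/leP.
  rewrite INR_expn2 EcY Rp_div; apply: Rp_le.
  rewrite mulnE mult_INR minus_INR; last exact/leP.
  have HJ1 : (1 <= INR #|J|)%R by apply: (le_INR 1); apply/leP; rewrite lt0n.
  have : (r <= r * INR #|J|)%R by nra.
  rewrite /tau1 /r mulnE mult_INR.
  move=> H; field_simplify; [nra|apply: Rgt_not_eq; lra].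
have [y0 Hy0] : exists y0, y0 \in Y by apply/set0Pn; rewrite -card_gt0.
pose i0 : 'I_N := Ordinal HN.
have Hbound : bound (min_entropy_cond Y).
  exists (L / INR b)%R => t Ht.
  have := Ht [set i0] y0; rewrite /prob_restr cards1 -/cY /= Rmult_1_r.
  set cnt := #|[set x in Y | [forall j in [set i0], x j == y0 j]]|.
  have Hc : (1 <= cnt)%N.
    rewrite card_gt0; apply/set0Pn; exists y0; rewrite inE Hy0 /=.
    by apply/forall_inP => j _.
  have HcR : (1 <= INR cnt)%R by apply: (le_INR 1); apply/leP.
  move=> H.
  have H' : (Rpower 2 (- L) <= Rpower 2 (- (INR b * t)))%R.
    apply: (Rle_trans _ (INR cnt / INR cY)) => //.
    have -> : (- L = 0 - L)%R by ring.
    rewrite -Rp_div Rpower_O; last lra.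
    rewrite -EcY /Rdiv; apply: Rmult_le_compat_r => //.
    by left; apply: Rinv_0_lt_compat.
  have := Rp_le_inv _ _ H'.
  move=> H2; apply: (Rmult_le_reg_l (INR b)) => //.
  have -> : (INR b * (L / INR b) = L)%R by field; apply: Rgt_not_eq; lra.
  lra.
have [s Hs] := completeness _ Hbound (ex_intro _ tau1 Hcond1).
have Hcs : min_entropy_cond Y s.
  move=> J al.
  have := @closed_cond (min_entropy_cond Y) s (prob_restr Y J al) (INR b * INR #|J|) Hs
    (ex_intro _ tau1 Hcond1).
  have Hc0 : (0 <= INR b * INR #|J|)%R by apply: Rmult_le_pos; apply: pos_INR.
  move=> /(_ Hc0) H.
  have -> : (INR b * s * INR #|J| = INR b * INR #|J| * s)%R by ring.
  apply: H => t Ht.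
  have -> : (INR b * INR #|J| * t = INR b * t * INR #|J|)%R by ring.
  exact: Ht.
exists Y; split.
  by rewrite -card_gt0.
split.
  rewrite /entropy_deficiency -/cY -/L -/r; lra.
split.
  exists s; split.
    split => // t Ht; case: Hs => Hub _; exact: Hub.
  case: Hs => Hub _; have := Hub _ Hcond1.
  rewrite /tau1 => H.
  have : (r / INR b < 1 / INR b)%R.
    rewrite /Rdiv; apply: Rmult_lt_compat_r => //; exact: Rinv_0_lt_compat.
  lra.
move=> I HI.
apply: Comb.notin_IPJ.
have : (INR #|I| < INR k)%R by rewrite Hk; lra.
by move/INR_lt/ltP.
Qed.
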